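(* Let $(\mathbf{X},\mathbf{p})$ be a $\{1,k\}$-payment equilibrium. If agent $i\in N_H$ is pEF1 towards every other agent, then $|X_i\cap L|\le\min_{j\in N_L}|X_j|$.
   Context: Fix $k>1$. Agents $N$, chores $M$, additive costs $c_i(e)\in\{1,k\}$. An allocation $\mathbf{X}$ partitions $M$ into bundles $X_i$. A payment vector assigns $p(e)>0$, $p(X)=\sum_{e\in X}p(e)$; $\alpha_{i,e}=c_i(e)/p(e)$, $\alpha_i=\min_e\alpha_{i,e}$, $\mathsf{MPB}_i=\{e:\alpha_{i,e}=\alpha_i\}$; $(\mathbf{X},\mathbf{p})$ is a $\{1,k\}$-payment equilibrium if $X_i\subseteq\mathsf{MPB}_i$ for all $i$ and $p(e)\in\{1,k\}$ for all $e$. $L=\{e:p(e)=1\}$, $H=\{e:p(e)=k\}$, $N_L=\{i:X_i\subseteq L\}$, $N_H=\{i:|X_i\cap H|\ge1\}$. Agent $i$ is pEF1 towards $j$ if $X_i=\emptyset$ or there is $e\in X_i$ with $p(X_i\setminus\{e\})\le p(X_j)$. *)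

(* Defs.v *)
From HB Require Import structures.
From mathcomp Require Import all_boot all_order all_algebra.
Set Implicit Arguments. Unset Strict Implicit. Unset Printing Implicit Defensive.
Import Order.TTheory GRing.Theory Num.Theory.
Local Open Scope ring_scope.

Section FairDivision.
Variables (R : realFieldType) (A M : finType).

Definition is_allocation (X : A -> {set M}) : Prop :=
  (forall e : M, exists i : A, e \in X i) /\
  (forall i j : A, i != j -> [disjoint X i & X j]).

Definition pay (p : M -> R) (S : {set M}) : R := \sum_(e in S) p e.

Definition alpha (c : A -> M -> R) (p : M -> R) (i : A) (e : M) : R := c i e / p e.

Definition MPB (c : A -> M -> R) (p : M -> R) (i : A) : {set M} :=
  [set e | [forall e', alpha c p i e <= alpha c p i e']].

Definition payment_equilibrium (k : R) (c : A -> M -> R) (X : A -> {set M})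
    (p : M -> R) : Prop :=
  (forall i, X i \subset MPB c p i) /\ (forall e, p e = 1 \/ p e = k).

Definition Lset (p : M -> R) : {set M} := [set e | p e == 1].
Definition Hset (k : R) (p : M -> R) : {set M} := [set e | p e == k].
Definition N_L (X : A -> {set M}) (p : M -> R) : {set A} :=
  [set i | X i \subset Lset p].
Definition N_H (k : R) (X : A -> {set M}) (p : M -> R) : {set A} :=
  [set i | (1 <= #|X i :&: Hset k p|)%N].

Definition pEF1 (p : M -> R) (X : A -> {set M}) (i j : A) : Prop :=
  X i = set0 \/ exists2 e, e \in X i & pay p (X i :\ e) <= pay p (X j).

End FairDivision.

(* Main.v *)
Require Import Defs.
From mathcomp Require Import all_boot all_order all_algebra.
Import Order.TTheory GRing.Theory Num.Theory.
Local Open Scope ring_scope.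

Lemma pay_geL (R : realFieldType) (M : finType) (p : M -> R)
  (hp : forall e, 0 < p e) (S : {set M}) :
  (#|S :&: Lset p|%:R : R) <= pay p S.
Proof.
rewrite /pay (big_setID (Lset p)) /=.
have -> : \sum_(e in S :&: Lset p) p e = \sum_(e in S :&: Lset p) (1 : R).
  apply: eq_bigr => e; rewrite !inE => /andP[_ /eqP ->] //.
rewrite sumr_const -[X in X <= _]addr0 lerD2l.
by apply: sumr_ge0 => e _; apply: ltW.
Qed.

Lemma pay_L (R : realFieldType) (M : finType) (p : M -> R) (S : {set M}) :
  S \subset Lset p -> pay p S = #|S|%:R.
Proof.
move=> /subsetP sub; rewrite /pay -sumr_const.
apply: eq_bigr => e /sub; rewrite inE => /eqP //.
Qed.

Theorem lemma6 (R : realFieldType) (k : R) (hk : 1 < k)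
    (A M : finType) (c : A -> M -> R)
    (hc : forall i e, c i e = 1 \/ c i e = k)
    (X : A -> {set M}) (hX : is_allocation X)
    (p : M -> R) (hp : forall e, 0 < p e)
    (heq : payment_equilibrium k c X p)
    (i : A) (hi : i \in N_H k X p)
    (hef : forall j, j != i -> pEF1 p X i j) :
  forall j, j \in N_L X p -> (#|X i :&: Lset p| <= #|X j|)%N.
Proof.
move=> j; rewrite inE => hj.
move: hi; rewrite inE card_gt0 => /set0Pn [h]; rewrite !inE => /andP[hXi /eqP hph].
have hL : h \notin Lset p.
  by rewrite inE hph; apply/eqP => E; move: hk; rewrite E ltxx.
have jni : j != i.
  apply/eqP => E; subst j; move/subsetP: hj => /(_ h hXi); by rewrite (negPf hL).
case: (hef j jni) => [E | [e he hle]].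
  by move: hXi; rewrite E inE.
rewrite (@pay_L R M p _ hj) in hle.
rewrite -(ler_nat R); apply: le_trans hle.
have [eh | neh] := eqVneq e h.
  subst e; apply: le_trans (@pay_geL R M p hp _).
  rewrite ler_nat; apply: subset_leq_card; apply/subsetP => x; rewrite !inE.
  move=> /andP[xi xl]; rewrite xi xl andbT andbT.
  by apply/eqP => E; subst x; move: hL; rewrite inE xl.
have hin : h \in X i :\ e by rewrite !inE hXi eq_sym neh.
rewrite /pay (big_setD1 h hin) /= hph -/(pay p _).
apply: le_trans (lerD (ltW hk) (@pay_geL R M p hp _)).
rewrite addrC natr1 ler_nat.
have sub : X i :&: Lset p \subset e |: ((X i :\ e :\ h) :&: Lset p).
  apply/subsetP => x; rewrite !inE => /andP[xi xl].
  have [//|xe] := eqVneq x e; rewrite /= xi xl !andbT.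
  by apply/eqP => E; subst x; move: hL; rewrite inE xl.
apply: leq_trans (subset_leq_card sub) _.
by rewrite cardsU1 -add1n leq_add2r leq_b1.
Qed.
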